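(* Let $L\in\mathbb N$, ${\bf A}\in\mathbb R^{M\times N}$, ${\bf b}\in\mathbb R^M$, $\tilde\eta>0$, and let $(r,{\bf u})$ follow the weight-normalized gradient flow with learning rates $(\eta_r,\eta_{\bf u})=(\tilde\eta,1)$, $\|{\bf u}_0\|_2=1$, and ${\bf u}(t)>0$ entrywise for all $t\ge0$ (this holds e.g. if $L\ge2$, $r_0>0$, ${\bf u}_0>0$). Then the quantity $$h_{\tilde\eta}(t):=(I-{\bf A}^\dagger{\bf A})\cdot\begin{cases}\log\Big({\bf u}(t)\exp\big(\tfrac{1}{2\tilde\eta}r(t)^2\big)\Big) & L=2,\\ {\bf u}(t)^{\odot(2-L)}\exp\big(\tfrac{2-L}{2\tilde\eta}r(t)^2\big) & L\neq2\end{cases}$$ is constant in $t\ge0$.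
   Context: $\odot$ denotes entrywise product/power, $\log$ acts entrywise; ${\bf A}^\dagger$ is the Moore–Penrose pseudoinverse. Loss: $\mathcal L({\bf x})=\frac{1}{2L}\|{\bf A}{\bf x}^{\odot L}-{\bf b}\|_2^2$. Weight-normalized loss $\tilde{\mathcal L}(r,{\bf u})=\mathcal L\big(\frac{r}{\|{\bf u}\|_2}{\bf u}\big)$ for $r\in\mathbb R$, ${\bf u}\in\mathbb R^N\setminus\{0\}$. Weight-normalized gradient flow: $\partial_t r=-\eta_r\nabla_r\tilde{\mathcal L}(r,{\bf u})$, $\partial_t{\bf u}=-\eta_{\bf u}\nabla_{\bf u}\tilde{\mathcal L}(r,{\bf u})$, $r(0)=r_0$, ${\bf u}(0)={\bf u}_0$. *)

(* Defs.v *)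
From HB Require Import structures.
From mathcomp Require Import all_boot all_order all_algebra.
From mathcomp Require Import all_classical all_reals all_analysis.
Set Implicit Arguments. Unset Strict Implicit. Unset Printing Implicit Defensive.
Import Order.TTheory GRing.Theory Num.Theory numFieldNormedType.Exports.
Local Open Scope classical_set_scope.
Local Open Scope ring_scope.

Section WN.
Variable R : realType.

Definition epow m n (x : 'M[R]_(m, n)) (k : nat) : 'M[R]_(m, n) :=
  map_mx (fun a => a ^+ k) x.

Definition norm2 n (x : 'cV[R]_n) : R := Num.sqrt (\sum_i x i 0 ^+ 2).

Definition loss M N (L : nat) (A : 'M[R]_(M, N)) (b : 'cV[R]_M) (x : 'cV[R]_N) : R :=
  (2 * L%:R)^-1 * norm2 (A *m epow x L - b) ^+ 2.

Definition wn_loss M N (L : nat) (A : 'M[R]_(M, N)) (b : 'cV[R]_M) (r : R) (u : 'cV[R]_N) : R :=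
  loss L A b ((r / norm2 u) *: u).

Definition grad_r M N (L : nat) (A : 'M[R]_(M, N)) (b : 'cV[R]_M) (r : R) (u : 'cV[R]_N) : R :=
  derive1 (fun s => wn_loss L A b s u) r.

Definition grad_u M N (L : nat) (A : 'M[R]_(M, N)) (b : 'cV[R]_M) (r : R) (u : 'cV[R]_N)
  : 'cV[R]_N :=
  \col_i derive1 (fun s => wn_loss L A b r (u + s *: delta_mx i 0)) 0.

Definition is_pinv M N (A : 'M[R]_(M, N)) (X : 'M[R]_(N, M)) : Prop :=
  [/\ A *m X *m A = A, X *m A *m X = X, (A *m X)^T = A *m X & (X *m A)^T = X *m A].

(* the Moore-Penrose pseudoinverse A^† (the unique X satisfying the Penrose conditions) *)
Definition pinv M N (A : 'M[R]_(M, N)) : 'M[R]_(N, M) := xget 0 [set X | is_pinv A X].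

Definition wn_gradient_flow M N (L : nat) (A : 'M[R]_(M, N)) (b : 'cV[R]_M)
  (eta_r eta_u : R) (r0 : R) (u0 : 'cV[R]_N) (r : R -> R) (u : R -> 'cV[R]_N) : Prop :=
  r 0 = r0 /\ u 0 = u0 /\ {within [set t : R | 0 <= t], continuous r} /\
      (forall i, {within [set t : R | 0 <= t], continuous (fun t => u t i 0)}) /\
      (forall t, 0 < t -> derivable r t 1 /\
                          derive1 r t = - (eta_r * grad_r L A b (r t) (u t))) /\
      (forall t, 0 < t -> forall i,
          derivable (fun s => u s i 0) t 1 /\
          derive1 (fun s => u s i 0) t = - (eta_u * grad_u L A b (r t) (u t) i 0)).

Definition h_quant M N (L : nat) (A : 'M[R]_(M, N)) (eta : R) (r : R) (u : 'cV[R]_N)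
  : 'cV[R]_N :=
  (1%:M - pinv A *m A) *m
    (if L == 2%N then map_mx (fun a => ln (a * expR (r ^+ 2 / (2 * eta)))) u
     else map_mx (fun a => a ^ (2%:Z - L%:Z) *
                           expR ((2%:Z - L%:Z)%:~R * r ^+ 2 / (2 * eta))) u).

End WN.

(* Main.v *)
Require Import Defs.
From HB Require Import structures.
From mathcomp Require Import all_boot all_order all_algebra.
From mathcomp Require Import all_classical all_reals all_analysis.
From mathcomp Require Import ring.
Import Order.TTheory GRing.Theory Num.Theory numFieldNormedType.Exports.
Local Open Scope classical_set_scope.
Local Open Scope ring_scope.
Set Implicit Arguments. Unset Strict Implicit. Unset Printing Implicit Defensive.


Section H.
Variable R : realType.
Implicit Types (f g : R -> R) (x df dg : R).

Lemma isd_cst x (c : R) : is_derive x 1 (fun _ : R => c) 0.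
Proof. exact: is_derive_cst. Qed.

Lemma isd_id x : is_derive x 1 (fun s : R => s) 1.
Proof. exact: is_derive_id. Qed.

Lemma isd_add f g x df dg : is_derive x 1 f df -> is_derive x 1 g dg ->
  is_derive x 1 (fun s => f s + g s) (df + dg).
Proof. by move=> h1 h2; have := is_deriveD h1 h2. Qed.

Lemma isd_opp f x df : is_derive x 1 f df ->
  is_derive x 1 (fun s => - f s) (- df).
Proof. by move=> h1; have := is_deriveN h1. Qed.

Lemma isd_mul f g x df dg : is_derive x 1 f df -> is_derive x 1 g dg ->
  is_derive x 1 (fun s => f s * g s) (f x * dg + g x * df).
Proof. by move=> h1 h2; have := is_deriveM h1 h2. Qed.

Lemma isd_exp f x df n : is_derive x 1 f df ->
  is_derive x 1 (fun s => f s ^+ n) (n%:R * f x ^+ n.-1 * df).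
Proof. by move=> h1; have := is_deriveX n h1; rewrite exprfctE. Qed.

Lemma isd_inv f x df : f x != 0 -> is_derive x 1 f df ->
  is_derive x 1 (fun s => (f s)^-1) (- (f x) ^- 2 * df).
Proof.
move=> fx h1; apply: DeriveDef; first exact: derivableV.
by rewrite deriveV // derive_val.
Qed.

Lemma isd_sum n (h : 'I_n -> R -> R) x (dh : 'I_n -> R) :
  (forall i, is_derive x 1 (h i) (dh i)) ->
  is_derive x 1 (fun s => \sum_(i < n) h i s) (\sum_(i < n) dh i).
Proof. by move=> H; have := is_derive_sum H; rewrite fct_sumE. Qed.

Lemma isd_comp f g x df dg : is_derive x 1 f df -> is_derive (f x) 1 g dg ->
  is_derive x 1 (fun s => g (f s)) (dg * df).
Proof.
move=> h1 h2.
have d1 : derivable f x 1 by case: h1.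
have d2 : derivable g (f x) 1 by case: h2.
apply: DeriveDef.
  apply/derivable1_diffP; apply: (@differentiable_comp _ _ _ _ f g);
  exact/derivable1_diffP.
have := derive1_comp d1 d2; rewrite !derive1E /comp => ->.
by rewrite !derive_val.
Qed.

Lemma isd_ext f g x df : (forall s, f s = g s) -> is_derive x 1 f df -> is_derive x 1 g df.
Proof. by move=> e; have -> : f = g by apply/funext. Qed.

Lemma isd_eq f x df df' : df = df' -> is_derive x 1 f df -> is_derive x 1 f df'.
Proof. by move=> ->. Qed.


Definition Gv M N (L : nat) (A : 'M[R]_(M, N)) (b : 'cV[R]_M) (x : 'cV[R]_N) : 'cV[R]_N :=
  \col_j (x j 0 ^+ L.-1 * (A^T *m (A *m epow x L - b)) j 0).

Lemma lossE M N (L : nat) (A : 'M[R]_(M, N)) (b : 'cV[R]_M) (x : 'cV[R]_N) :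
  loss L A b x = (2 * L%:R)^-1 * \sum_k (\sum_j A k j * x j 0 ^+ L - b k 0) ^+ 2.
Proof.
rewrite /loss /norm2 sqr_sqrtr; last by apply: sumr_ge0 => k _; exact: sqr_ge0.
congr (_ * _); apply: eq_bigr => k _; rewrite !mxE.
by under eq_bigr do rewrite mxE.
Qed.

Lemma loss_path M N (L : nat) (A : 'M[R]_(M, N)) (b : 'cV[R]_M)
  (w : R -> 'cV[R]_N) (s0 : R) (dw : 'I_N -> R) : (0 < L)%N ->
  (forall j, is_derive s0 1 (fun s => w s j 0) (dw j)) ->
  is_derive s0 1 (fun s => loss L A b (w s)) (\sum_j Gv L A b (w s0) j 0 * dw j).
Proof.
move=> L0 hw.
apply: (@isd_ext (fun s => (2 * L%:R)^-1 *
   \sum_k (\sum_j A k j * w s j 0 ^+ L - b k 0) ^+ 2)); first by move=> s; rewrite lossE.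
set e := fun k : 'I_M => \sum_j A k j * w s0 j 0 ^+ L - b k 0.
have hk : forall k, is_derive s0 1 (fun s => \sum_j A k j * w s j 0 ^+ L - b k 0)
   (\sum_j A k j * (L%:R * w s0 j 0 ^+ L.-1 * dw j)).
  move=> k; apply: isd_eq (isd_add (isd_sum (fun j => isd_mul (isd_cst _ (A k j)) (isd_exp L (hw j))))
      (isd_opp (isd_cst _ (b k 0)))).
  by rewrite oppr0 addr0; apply: eq_bigr => j _; rewrite mulr0 addr0.
apply: isd_eq (isd_mul (isd_cst _ _) (isd_sum (fun k => isd_exp 2 (hk k)))).
rewrite mulr0 addr0.
rewrite big_distrr /=.
under eq_bigr do rewrite expr1 big_distrr /=.
under eq_bigr do rewrite big_distrr /=.
rewrite exchange_big /=; apply: eq_bigr => j _.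
rewrite /Gv !mxE [in RHS]big_distrr [in RHS]big_distrl /=; apply: eq_bigr => k _.
rewrite [A^T _ _]mxE.
have -> : (A *m epow (w s0) L - b) k 0 = e k.
  by rewrite /e !mxE; under eq_bigr do rewrite mxE.
have L0' : (L%:R : R) != 0 by rewrite pnatr_eq0 -lt0n.
rewrite /e; field; exact: L0'.
Qed.


Lemma sum_delta n (i : 'I_n) (f : 'I_n -> R) :
  \sum_k f k * delta_mx i (0 : 'I_1) k 0 = f i.
Proof.
rewrite (bigD1 i) //= mxE !eqxx mulr1 big1 ?addr0 // => k /negPf ki.
by rewrite mxE ki mulr0.
Qed.

Lemma grad_rE M N (L : nat) (A : 'M[R]_(M, N)) (b : 'cV[R]_M) r (u : 'cV[R]_N) :
  (0 < L)%N ->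
  grad_r L A b r u =
  \sum_j Gv L A b ((r / norm2 u) *: u) j 0 * (u j 0 / norm2 u).
Proof.
move=> L0; rewrite /grad_r derive1E.
set n := norm2 u.
have hw : forall j, is_derive r 1 (fun s => ((s / n) *: u) j 0) (u j 0 / n).
  move=> j; apply: (@isd_ext (fun s => s * n^-1 * u j 0)).
    by move=> s; rewrite mxE.
  apply: isd_eq (isd_mul (isd_mul (isd_id _) (isd_cst _ _)) (isd_cst _ _)).
  by rewrite !mulr0 !add0r mulr1 mulrC.
have H := loss_path A b L0 hw. rewrite /wn_loss -/n. by rewrite derive_val.
Qed.


Lemma grad_uE M N (L : nat) (A : 'M[R]_(M, N)) (b : 'cV[R]_M) r (u : 'cV[R]_N) i :
  (0 < L)%N -> 0 < norm2 u ->
  grad_u L A b r u i 0 =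
  r / norm2 u * (Gv L A b ((r / norm2 u) *: u) i 0 -
    u i 0 * (\sum_j Gv L A b ((r / norm2 u) *: u) j 0 * u j 0) / norm2 u ^+ 2).
Proof.
move=> L0 npos; rewrite /grad_u mxE derive1E.
set n := norm2 u.
pose d := fun k : 'I_N => (delta_mx i (0 : 'I_1) : 'M[R]_(N, 1)) k 0.
pose S := fun s : R => \sum_k (u k 0 + s * d k) ^+ 2.
have S0 : S 0 = n ^+ 2.
  rewrite /S /n /norm2 sqr_sqrtr; last by apply: sumr_ge0 => k _; exact: sqr_ge0.
  by apply: eq_bigr => k _; rewrite mul0r addr0.
have Spos : 0 < S 0 by rewrite S0 exprn_gt0.
have sqS0 : Num.sqrt (S 0) = n by rewrite S0 sqrtr_sqr gtr0_norm.
have hS : is_derive (0 : R) 1 S (\sum_k 2 * u k 0 * d k).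
  apply: isd_eq (isd_sum (fun k => isd_exp 2 (isd_add (isd_cst _ (u k 0))
     (isd_mul (isd_id _) (isd_cst _ (d k)))))).
  by apply: eq_bigr => k _; rewrite !mulr0 !add0r mul0r addr0 mulr1 expr1.
have hn : is_derive (0 : R) 1 (fun s => Num.sqrt (S s))
    ((2 * n)^-1 * \sum_k 2 * u k 0 * d k).
  apply: isd_eq (isd_comp hS (is_derive1_sqrt Spos)).
  by rewrite sqS0.
have hi : is_derive (0 : R) 1 (fun s => (Num.sqrt (S s))^-1)
    (- n ^- 2 * ((2 * n)^-1 * \sum_k 2 * u k 0 * d k)).
  apply: isd_eq (isd_inv _ hn); first by rewrite /= sqS0.
  by rewrite /= sqS0 gt_eqF.
have hw : forall j, is_derive (0 : R) 1
   (fun s => ((r / norm2 (u + s *: delta_mx i 0)) *: (u + s *: delta_mx i 0)) j 0)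
   (r * (- n ^- 2 * ((2 * n)^-1 * \sum_k 2 * u k 0 * d k)) * u j 0 + r * n^-1 * d j).
  move=> j.
  apply: (@isd_ext (fun s => r * (Num.sqrt (S s))^-1 * (u j 0 + s * d j))).
    move=> s; rewrite /S /d /norm2 !mxE; congr (r * (Num.sqrt _)^-1 * _).
    by apply: eq_bigr => k _; rewrite !mxE.
  have := (isd_mul (isd_mul (isd_cst _ r) hi)
      (isd_add (isd_cst _ (u j 0)) (isd_mul (isd_id _) (isd_cst _ (d j))))).
  move=> H; apply: (isd_eq _ H).
  rewrite /= sqS0 !mulr0 !add0r mul0r addr0 mulr1; ring.
have H := loss_path A b L0 hw.
rewrite /wn_loss derive_val scale0r addr0 -/n.
have -> : \sum_k 2 * u k 0 * d k = 2 * u i 0.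
  rewrite -(sum_delta i (fun k => 2 * u k 0)); apply: eq_bigr => k _; done.
under eq_bigr do rewrite mulrDr.
rewrite big_split /=.
under [X in X + _]eq_bigr do rewrite mulrCA.
under [X in _ + X]eq_bigr do rewrite mulrA.
rewrite -big_distrr /= /d (sum_delta i (fun j => Gv L A b ((r / n) *: u) j 0 * (r / n))).
have n0 : n != 0 by rewrite gt_eqF.
field; exact: n0.
Qed.


Definition A0 : set R := [set t : R | 0 <= t]%classic.

Lemma const_on (f : R -> R) : {within A0, continuous f} ->
  (forall t : R, 0 < t -> is_derive t 1 f 0) -> forall t : R, 0 <= t -> f t = f 0.
Proof.
move=> cf df t; rewrite le_eqVlt => /orP[/eqP<-//|t0].
have d2 : forall x, x \in `]0, t[ -> is_derive x 1 f ((fun _ => 0 : R) x).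
  by move=> x; rewrite in_itv /= => /andP[x0 _]; exact: df.
have c2 : {within `[0, t], continuous f}.
  apply: continuous_subspaceW cf => s /=; rewrite in_itv /= => /andP[s0 _].
  exact: s0.
have [c _] := MVT t0 d2 c2.
by rewrite mul0r => /eqP; rewrite subr_eq0 => /eqP.
Qed.


Lemma wc_cst (c : R) : {within A0, continuous (fun _ : R => c)}.
Proof. by apply: continuous_subspaceT => x; exact: cvg_cst. Qed.

Lemma wc_id : {within A0, continuous (fun s : R => s)}.
Proof. by apply: continuous_subspaceT => x. Qed.

Lemma wc_add (f g : R -> R) : {within A0, continuous f} -> {within A0, continuous g} ->
  {within A0, continuous (fun s => f s + g s)}.
Proof. by move=> cf cg; have := within_continuousD cf cg. Qed.

Lemma wc_mul (f g : R -> R) : {within A0, continuous f} -> {within A0, continuous g} ->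
  {within A0, continuous (fun s => f s * g s)}.
Proof. by move=> cf cg x; apply: cvgM; [exact: cf|exact: cg]. Qed.

Lemma wc_sum n (f : 'I_n -> R -> R) : (forall i, {within A0, continuous (f i)}) ->
  {within A0, continuous (fun s => \sum_(i < n) f i s)}.
Proof.
move=> cf; elim: n f cf => [|n IH] f cf.
  by under eq_fun do rewrite big_ord0; exact: wc_cst.
under eq_fun do rewrite big_ord_recr /=.
apply: wc_add; last exact: cf.
exact: (IH (fun i => f (widen_ord (leqnSn n) i))).
Qed.

Lemma wc_comp (f g : R -> R) : {within A0, continuous f} ->
  (forall t, A0 t -> {for f t, continuous g}) ->
  {within A0, continuous (fun s => g (f s))}.
Proof.
move=> cf cg; have := @within_continuous_comp _ _ _ A0 f g.
apply => //; move=> y /set_mem [t At <-]; exact: cg.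
Qed.

Lemma isd_cont (g : R -> R) (y : R) dg : is_derive y 1 g dg -> {for y, continuous g}.
Proof.
move=> [d _]; apply: differentiable_continuous; exact/derivable1_diffP.
Qed.


Lemma isd_exprz (f : R -> R) (x : R) df (z : int) : f x != 0 -> is_derive x 1 f df ->
  is_derive x 1 (fun s => f s ^ z) (z%:~R * f x ^ (z - 1) * df).
Proof.
case: z => n fx h.
  apply: (@isd_ext (fun s => f s ^+ n)) => //.
  apply: isd_eq (isd_exp n h); case: n => [|m]; first by rewrite !mul0r.
  have -> : (Posz m.+1 - 1 = Posz m)%R by rewrite -addn1 PoszD addrK.
  by rewrite pmulrn.
have fxn : f x ^+ n.+1 != 0 by rewrite expf_neq0.
apply: (@isd_ext (fun s => (f s ^+ n.+1)^-1)) => //.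
have H := @isd_inv (fun s => f s ^+ n.+1) x _ fxn (isd_exp n.+1 h); apply: (isd_eq _ H).
have -> : (Negz n - 1 = Negz n.+1)%R.
  by rewrite !NegzE -opprD -PoszD addn1.
rewrite NegzE mulrNz pmulrn /=.
rewrite /exprz /=.
rewrite !exprSr.
field; rewrite ?fx ?expf_neq0 //.
Qed.


Lemma wc_exp (f : R -> R) n : {within A0, continuous f} ->
  {within A0, continuous (fun s => f s ^+ n)}.
Proof.
move=> cf; elim: n => [|n IH]; first by under eq_fun do rewrite expr0; exact: wc_cst.
by under eq_fun do rewrite exprS; exact: wc_mul.
Qed.

Lemma isd_derive1 (f : R -> R) (t : R) : derivable f t 1 -> is_derive t 1 f (derive1 f t).
Proof. by move=> d; rewrite derive1E; exact: derivableP. Qed.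

End H.


Section P1.
Variable R : realType.

Lemma gram_unit k n (F : 'M[R]_(k, n)) : row_free F -> F *m F^T \in unitmx.
Proof.
move=> fF; rewrite -row_free_unit; apply: inj_row_free => v H.
have H2 : (v *m F) *m (v *m F)^T = 0.
  by rewrite trmx_mul mulmxA -(mulmxA v) H mul0mx.
have : v *m F = 0.
  apply/matrixP => i j; rewrite [RHS]mxE.
  have := congr1 (fun M : 'M[R]_1 => M i i) H2; rewrite [RHS]mxE mxE => S.
  have P0 : forall l : 'I_n, xpredT l -> 0 <= (v *m F) i l * (v *m F)^T l i.
    by move=> l _; rewrite [(v *m F)^T _ _]mxE -expr2 sqr_ge0.
  have := @psumr_eq0P _ 'I_n xpredT _ P0 S j isT.
  by rewrite [(v *m F)^T _ _]mxE -expr2 => /eqP; rewrite sqrf_eq0 => /eqP.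
by move/eqP; rewrite mulmx_free_eq0 // => /eqP.
Qed.

Lemma pinv_fact M N k (C : 'M[R]_(M, k)) (F : 'M[R]_(k, N)) :
  F *m F^T \in unitmx -> C^T *m C \in unitmx ->
  is_pinv (C *m F) (F^T *m invmx (F *m F^T) *m invmx (C^T *m C) *m C^T).
Proof.
move=> uF uC.
set GF := invmx (F *m F^T); set GC := invmx (C^T *m C).
have sGF : GF^T = GF by rewrite /GF trmx_inv trmx_mul trmxK.
have sGC : GC^T = GC by rewrite /GC trmx_inv trmx_mul trmxK.
set X := F^T *m GF *m GC *m C^T.
have eF : F *m X = GC *m C^T by rewrite /X !mulmxA mulmxV // mul1mx.
have eXC : X *m C = F^T *m GF.
  by rewrite /X -mulmxA -mulmxA mulVmx // mulmx1.
have e1 : F *m (F^T *m GF) = 1%:M by rewrite mulmxA mulmxV.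
split.
- by rewrite -(mulmxA C F X) eF !mulmxA -(mulmxA _ C^T C) -(mulmxA C GC) /GC mulVmx // mulmx1.
- by rewrite mulmxA eXC -mulmxA eF /X !mulmxA.
- by rewrite -mulmxA eF mulmxA !trmx_mul trmxK sGC mulmxA.
- by rewrite mulmxA eXC !trmx_mul trmxK sGF mulmxA.
Qed.

Lemma pinv_exists M N (A : 'M[R]_(M, N)) : exists X, is_pinv A X.
Proof.
have uF : row_base A *m (row_base A)^T \in unitmx.
  by apply: gram_unit; exact: row_base_free.
have uC : (col_base A)^T *m col_base A \in unitmx.
  rewrite -{2}(trmxK (col_base A)).
  apply: gram_unit; rewrite /row_free mxrank_tr.
  by have := col_base_full A; rewrite /row_full => /eqP ->.
rewrite -{1}(mulmx_base A); eexists; exact: pinv_fact.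
Qed.

Lemma pinv_is M N (A : 'M[R]_(M, N)) : is_pinv A (Defs.pinv A).
Proof.
have [X hX] := pinv_exists A.
by have := @xgetI _ 0 (fun X => is_pinv A X) X hX.
Qed.

Lemma proj_killsT M N (A : 'M[R]_(M, N)) : (1%:M - Defs.pinv A *m A) *m A^T = 0.
Proof.
have [h1 _ _ h4] := pinv_is A.
rewrite mulmxBl mul1mx -h4 -trmx_mul mulmxA h1 subrr //.
Qed.
End P1.


Section Main.
Variables (R : realType) (M N L : nat) (A : 'M[R]_(M, N)) (b : 'cV[R]_M)
  (eta : R) (r0 : R) (u0 : 'cV[R]_N) (r : R -> R) (u : R -> 'cV[R]_N).
Hypotheses (L0 : (0 < L)%N) (eta0 : 0 < eta) (nu0 : norm2 u0 = 1)
  (flow : wn_gradient_flow L A b eta 1 r0 u0 r u)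
  (upos : forall t, 0 <= t -> forall i, 0 < u t i 0) (Npos : (0 < N)%N).

Let i0 : 'I_N := Ordinal Npos.

Lemma Spos t : 0 <= t -> 0 < \sum_i u t i 0 * u t i 0.
Proof.
move=> t0; rewrite (bigD1 i0) //=; apply: ltr_pwDl.
  by rewrite mulr_gt0 ?upos.
by apply: sumr_ge0 => i _; rewrite -expr2 sqr_ge0.
Qed.

Lemma npos t : 0 <= t -> 0 < norm2 (u t).
Proof.
move=> t0; rewrite /norm2 sqrtr_gt0.
by under eq_bigr do rewrite expr2; exact: Spos.
Qed.

Lemma n2E (v : 'cV[R]_N) : norm2 v ^+ 2 = \sum_i v i 0 * v i 0.
Proof.
rewrite /norm2 sqr_sqrtr; last by apply: sumr_ge0 => i _; exact: sqr_ge0.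
by under eq_bigr do rewrite expr2.
Qed.

Lemma S_const t : 0 <= t -> \sum_i u t i 0 * u t i 0 = 1.
Proof.
have [r0e [u0e [cr [cu [dr du]]]]] := flow.
move=> t0.
have -> : 1 = \sum_i u 0 i 0 * u 0 i 0 by rewrite -n2E u0e nu0 expr1n.
apply: (@const_on _ (fun s => \sum_i u s i 0 * u s i 0)) => //.
  by apply: wc_sum => i; apply: wc_mul; exact: cu.
move=> s s0.
have hu : forall i, is_derive s 1 (fun x => u x i 0) (- (1 * grad_u L A b (r s) (u s) i 0)).
  move=> i; have [d e] := du s s0 i; rewrite -e; exact: isd_derive1.
apply: isd_eq (isd_sum (fun i => isd_mul (hu i) (hu i))).
have n0 := npos (ltW s0).
under eq_bigr do rewrite (grad_uE _ _ _ _ L0 n0).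
set n := norm2 (u s).
set c := \sum_j Gv L A b ((r s / n) *: u s) j 0 * u s j 0.
have nE : n ^+ 2 = \sum_i u s i 0 * u s i 0 by rewrite n2E.
set G := fun i => Gv L A b ((r s / n) *: u s) i 0.
rewrite (eq_bigr (fun i => (-(2 * r s / n)) * (u s i 0 * G i) +
   (2 * r s / n * c / n ^+ 2) * (u s i 0 * u s i 0))); last by move=> i _; rewrite /G; ring.
rewrite big_split /= -!big_distrr /= -nE.
have -> : \sum_i u s i 0 * G i = c by apply: eq_bigr => i _; rewrite mulrC.
have nn : n != 0 by rewrite gt_eqF.
by field.
Qed.


Lemma n1 t : 0 <= t -> norm2 (u t) = 1.
Proof.
by move=> t0; rewrite /norm2; under eq_bigr do rewrite expr2; rewrite S_const // sqrtr1.
Qed.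

Let Q t := A^T *m (A *m epow ((r t / norm2 (u t)) *: u t) L - b).

Lemma GvE (x : 'cV[R]_N) i : Gv L A b x i 0 = x i 0 ^+ L.-1 * (A^T *m (A *m epow x L - b)) i 0.
Proof. by rewrite /Gv mxE. Qed.

Lemma hr (t : R) : 0 < t -> is_derive t 1 r (- (eta * grad_r L A b (r t) (u t))).
Proof.
have [_ [_ [_ [_ [dr _]]]]] := flow.
by move=> t0; have [d e] := dr t t0; rewrite -e; exact: isd_derive1.
Qed.

Lemma hu (t : R) i : 0 < t -> is_derive t 1 (fun s => u s i 0) (- (1 * grad_u L A b (r t) (u t) i 0)).
Proof.
have [_ [_ [_ [_ [_ du]]]]] := flow.
by move=> t0; have [d e] := du t t0 i; rewrite -e; exact: isd_derive1.
Qed.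

Lemma d_L2 (L2 : L = 2%N) (t : R) i : 0 < t ->
  is_derive t 1 (fun s => ln (u s i 0 * expR (r s ^+ 2 / (2 * eta)))) (- r t ^+ 2 * Q t i 0).
Proof.
move=> t0.
have hE := isd_comp (isd_mul (isd_exp 2 (hr t0)) (isd_cst t (2 * eta)^-1))
  (is_derive_expR (r t ^+ 2 / (2 * eta))).
have hP := isd_mul (hu i t0) hE.
have pos : 0 < u t i 0 * expR (r t ^+ 2 / (2 * eta)) by rewrite mulr_gt0 ?expR_gt0 ?upos ?ltW.
have H := isd_comp hP (is_derive1_ln pos).
apply: (isd_eq _ H).
rewrite grad_rE // (grad_uE _ _ _ _ L0 (npos (ltW t0))) n1 ?ltW //.
rewrite /Q n1 ?ltW // !GvE mxE L2 /= !divr1 expr1n divr1.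
under eq_bigr do rewrite divr1.
have e0 : expR (r t ^+ 2 / (2 * eta)) != 0 by rewrite gt_eqF ?expR_gt0.
have u0' : u t i 0 != 0 by rewrite gt_eqF ?upos ?ltW.
have et : eta != 0 by rewrite gt_eqF.
rewrite expr1 mulr0 add0r expr1.
have H3 : forall (v E eta w c q : R), v != 0 -> E != 0 -> eta != 0 -> (v * E)^-1 *
  (v * (E * ((2 * eta)^-1 * (2 * w * - (eta * c)))) +
   E * - (1 * (w * ((w * v) * q - v * c)))) =
  - w ^+ 2 * q.
  move=> v1 E1 eta1 w1 c1 q1 h1 h2 h3. field. by rewrite h1 h2 h3.
exact: H3.
Qed.


Lemma d_Ln2 (t : R) i : 0 < t ->
  is_derive t 1 (fun s => u s i 0 ^ (2%:Z - L%:Z) *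
      expR ((2%:Z - L%:Z)%:~R * r s ^+ 2 / (2 * eta)))
    (- ((2%:Z - L%:Z)%:~R * expR ((2%:Z - L%:Z)%:~R * r t ^+ 2 / (2 * eta)) * r t ^+ L)
       * Q t i 0).
Proof.
move=> t0.
set z := (2%:Z - L%:Z).
have u0' : u t i 0 != 0 by rewrite gt_eqF ?upos ?ltW.
have hE := isd_comp (isd_mul (isd_mul (isd_cst t z%:~R) (isd_exp 2 (hr t0))) (isd_cst t (2 * eta)^-1))
  (is_derive_expR (z%:~R * r t ^+ 2 / (2 * eta))).
have hz := @isd_exprz _ (fun s => u s i 0) t _ z u0' (hu i t0).
have H := isd_mul hz hE.
apply: (isd_eq _ H).
rewrite grad_rE // (grad_uE _ _ _ _ L0 (npos (ltW t0))) n1 ?ltW //.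
rewrite /Q n1 ?ltW // !GvE mxE /= !divr1 expr1n divr1.
under eq_bigr do rewrite divr1.
have e1 : u t i 0 ^ z = u t i 0 ^ (z - 1) * u t i 0.
  by rewrite -[X in _ * X]expr1z -expfzDr // subrK.
have e2 : u t i 0 ^+ L.-1 = (u t i 0 ^ (z - 1))^-1.
  apply: (@mulfI _ (u t i 0 ^ (z - 1))); first by rewrite expfz_neq0.
  rewrite mulfV ?expfz_neq0 //.
  have -> : u t i 0 ^+ L.-1 = u t i 0 ^ (L.-1)%:Z by [].
  rewrite -expfzDr //.
  have -> : (z - 1 + (L.-1)%:Z = 0)%R.
    rewrite /z -[in L%:Z](prednK L0) -addn1 PoszD; ring.
  by rewrite expr0z.
have eL : r t ^+ L = r t ^+ L.-1 * r t by rewrite -exprSr prednK.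
rewrite e1 exprMn e2 eL !mulr0 add0r addr0 expr1.
have az : u t i 0 ^ (z - 1) != 0 by rewrite expfz_neq0.
have et : eta != 0 by rewrite gt_eqF.

set a := u t i 0 ^ (z - 1) in az *.
set E := expR _.
set c := \sum_(j < N) _.
set q := (A^T *m _) i 0.
set p := r t ^+ L.-1.
set zR := z%:~R.
set w := r t.
set v := u t i 0 in u0' *.
clearbody a E c q p zR w v.
by field; rewrite az et.
Qed.


Lemma wc_L2 i : {within @A0 R, continuous (fun s => ln (u s i 0 * expR (r s ^+ 2 / (2 * eta))))}.
Proof.
have [_ [_ [cr [cu _]]]] := flow.
apply: wc_comp.
  apply: wc_mul; first exact: cu.
  apply: wc_comp; last by move=> s _; exact: continuous_expR.
  apply: wc_mul; last exact: wc_cst.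
  exact: wc_exp.
move=> s s0; apply: continuous_ln.
by rewrite mulr_gt0 ?expR_gt0 ?upos.
Qed.

Lemma wc_Ln2 i : {within @A0 R, continuous (fun s => u s i 0 ^ (2%:Z - L%:Z) *
      expR ((2%:Z - L%:Z)%:~R * r s ^+ 2 / (2 * eta)))}.
Proof.
have [_ [_ [cr [cu _]]]] := flow.
apply: wc_mul.
  apply: (@wc_comp R (fun s => u s i 0) (fun a => a ^ (2%:Z - L%:Z))); first exact: cu.
  move=> s s0.
  have nz : u s i 0 != 0 by rewrite gt_eqF ?upos.
  exact: isd_cont (@isd_exprz _ (fun a => a) (u s i 0) 1 (2%:Z - L%:Z) nz (isd_id _)).
apply: wc_comp; last by move=> s _; exact: continuous_expR.
apply: wc_mul; last exact: wc_cst.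
apply: wc_mul; first exact: wc_cst.
exact: wc_exp.
Qed.

Lemma PQ0 (s : R) k (P : 'M[R]_N) (K : R) : P = 1%:M - Defs.pinv A *m A ->
  \sum_j P k j * (K * Q s j 0) = 0.
Proof.
move=> ->.
under eq_bigr do rewrite mulrCA.
rewrite -big_distrr /=.
have : ((1%:M - Defs.pinv A *m A) *m Q s) k 0 = 0.
  by rewrite /Q mulmxA proj_killsT mul0mx mxE.
by rewrite mxE => ->; rewrite mulr0.
Qed.

Lemma main_sec t : 0 <= t -> h_quant L A eta (r t) (u t) = h_quant L A eta (r 0) (u 0).
Proof.
move=> t0; apply/matrixP => k j; rewrite (ord1 j) /h_quant.
set P := 1%:M - Defs.pinv A *m A.
have eP : P = 1%:M - Defs.pinv A *m A by [].
clearbody P.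
case: (eqVneq L 2%N) => [L2|L2].
  rewrite !mxE; under eq_bigr do rewrite mxE; under [RHS]eq_bigr do rewrite mxE.
  apply: (@const_on R (fun s => \sum_j P k j * ln (u s j 0 * expR (r s ^+ 2 / (2 * eta))))) => //.
    by apply: wc_sum => i; apply: wc_mul; [exact: wc_cst | exact: wc_L2].
  move=> s s0.
  have H := isd_sum (fun i => isd_mul (isd_cst s (P k i)) (d_L2 L2 i s0)).
  apply: (isd_eq _ H).
  under eq_bigr do rewrite mulr0 addr0.
  by rewrite (PQ0 _ _ _ eP).
rewrite !mxE; under eq_bigr do rewrite mxE; under [RHS]eq_bigr do rewrite mxE.
apply: (@const_on R (fun s => \sum_j P k j * (u s j 0 ^ (2%:Z - L%:Z) *
      expR ((2%:Z - L%:Z)%:~R * r s ^+ 2 / (2 * eta))))) => //.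
  by apply: wc_sum => i; apply: wc_mul; [exact: wc_cst | exact: wc_Ln2].
move=> s s0.
have H := isd_sum (fun i => isd_mul (isd_cst s (P k i)) (d_Ln2 i s0)).
apply: (isd_eq _ H).
under eq_bigr do rewrite mulr0 addr0.
by rewrite (PQ0 _ _ _ eP).
Qed.

End Main.

Theorem mainTheorem10 (R : realType) (M N L : nat) (A : 'M[R]_(M, N)) (b : 'cV[R]_M)
  (eta : R) (r0 : R) (u0 : 'cV[R]_N) (r : R -> R) (u : R -> 'cV[R]_N) :
  (0 < L)%N -> 0 < eta -> norm2 u0 = 1 ->
  wn_gradient_flow L A b eta 1 r0 u0 r u ->
  (forall t, 0 <= t -> forall i, 0 < u t i 0) ->
  forall t, 0 <= t -> h_quant L A eta (r t) (u t) = h_quant L A eta (r 0) (u 0).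
Proof.
move=> L0 eta0 nu0 flow upos t t0.
have [N0|Npos] := posnP N.
  apply/matrixP => i; exfalso.
  have : (nat_of_ord i < N)%N := ltn_ord i.
  by move: (nat_of_ord i) => v; rewrite N0.
exact: (main_sec L0 eta0 nu0 flow upos Npos t0).
Qed.
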